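(* Let $(\Gamma_n)$ be a sequence of invertible $n\times n$ correlation matrices satisfying the Correlation Condition with bounding function $g$, and let $S=\sup_n\|\Gamma_n^{-1}\|_{\max}$. Fix $\alpha\ge1$. Then there is $n_0$ such that for all $n\ge n_0$ and every positive integer $q$, $$\sum_{y\in\mathcal{M}_{n,q}}\exp\big(-\log(\alpha n)\,y^T\Gamma_n y\big)\ \le\ \exp\big((2+S)\,g(\alpha)\big),$$ where $\mathcal{M}_{n,q}=\{y\in(\mathbb{Z}\cap[-q/2,q/2))^n:\ \|2\pi y/q\|_\infty\le 1/\sqrt q\}$.
   Context: $\|M\|_{\max}=\max_{a,b}|M_{ab}|$. Correlation Condition for a sequence $(\Gamma_n)$ of invertible $n\times n$ correlation matrices, with $\Psi_n=\Gamma_n^{-1}$: (i) $\sup_n\|\Psi_n\|_{\max}<\infty$; (ii) letting $\Psi_{n,k}$ be the principal submatrix of the first $k$ rows and columns of $\Psi_n$, partitioned as $\begin{bmatrix}\Psi^{(11)}_{n,k}&\Psi^{(12)}_{n,k}\\\Psi^{(21)}_{n,k}&\Psi^{(22)}_{n,k}\end{bmatrix}$ with $\Psi^{(11)}_{n,k}$ the leading $(k-1)\times(k-1)$ block and $\Psi^{(22)}_{n,k}$ the $(k,k)$ entry, define $a^{(n)}_1=(\Psi_n)_{11}^{-1}$ and $a^{(n)}_k=\big(\Psi^{(22)}_{n,k}-\Psi^{(21)}_{n,k}(\Psi^{(11)}_{n,k})^{-1}\Psi^{(12)}_{n,k}\big)^{-1}$ for $k\ge2$; then there is a monotone decreasing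 $g:[1,\infty)\to[0,\infty)$ independent of $n$ with $g(\alpha)\to0$ as $\alpha\to\infty$ and $\sup_n\sum_{k=1}^n(\alpha n)^{-a_k^{(n)}}\le g(\alpha)$ for all $\alpha\ge1$. *)

(* Defs.v *)
From HB Require Import structures.
From mathcomp Require Import all_boot all_order all_algebra.
From mathcomp Require Import all_classical all_reals all_analysis.
Set Implicit Arguments. Unset Strict Implicit. Unset Printing Implicit Defensive.
Import Order.TTheory GRing.Theory Num.Theory.
Import numFieldNormedType.Exports.
Local Open Scope classical_set_scope.
Local Open Scope ring_scope.

Definition maxnorm (R : realType) m n (M : 'M[R]_(m, n)) : R :=
  \big[Num.max/0]_(a < m) \big[Num.max/0]_(b < n) `|M a b|.

Definition supnorm (R : realType) n (v : 'I_n -> R) : R :=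
  \big[Num.max/0]_(i < n) `|v i|.

Definition correlation_matrix (R : realType) n (G : 'M[R]_n) : Prop :=
  G^T = G /\ (forall i, G i i = 1) /\
  (forall x : 'cV[R]_n, 0 <= (x^T *m G *m x) 0 0).

(* a_{k+1}^{(n)} for the 0-based index k : 'I_n.  Psi_{n,k+1} has leading
   block Psi11 (size k), column Psi12, row Psi21, corner Psi22 = Psi k k.
   For k = 0 the blocks are empty and this is (Psi 0 0)^-1. *)
Definition schur_a (R : realType) n (Psi : 'M[R]_n) (k : 'I_n) : R :=
  let w : 'I_k -> 'I_n := widen_ord (ltnW (ltn_ord k)) in
  let P11 : 'M[R]_k := \matrix_(i, j) Psi (w i) (w j) in
  let P12 : 'M[R]_(k, 1) := \matrix_(i, j) Psi (w i) k in
  let P21 : 'M[R]_(1, k) := \matrix_(i, j) Psi k (w j) in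
  (Psi k k - (P21 *m invmx P11 *m P12) 0 0)^-1.

Definition CorrelationCondition (R : realType) (Gamma : forall n, 'M[R]_n)
    (g : R -> R) : Prop :=
  (exists B : R, forall n, maxnorm (invmx (Gamma n)) <= B) /\
  (forall a b : R, 1 <= a -> a <= b -> g b <= g a) /\
  (forall a : R, 1 <= a -> 0 <= g a) /\
  (g x @[x --> +oo] --> (0 : R)) /\
  (forall (n : nat) (alpha : R), 1 <= alpha ->
     \sum_(k < n) (alpha * n%:R) `^ (- schur_a (invmx (Gamma n)) k) <= g alpha).

Definition supInvMax (R : realType) (Gamma : forall n, 'M[R]_n) : R :=
  sup [set x : R | exists n, x = maxnorm (invmx (Gamma n))].

(* Enumeration of candidate integers: j : 'I_(2q+1) |-> j - q, covering [-q, q]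
   which contains Z \cap [-q/2, q/2). *)
Definition toZ (q : nat) (j : 'I_(2 * q).+1) : int := (j : nat)%:Z - q%:Z.

Definition inM (R : realType) (n q : nat) (y : 'I_n -> int) : bool :=
  [forall i, (- (q%:R / 2) <= (y i)%:~R :> R) && ((y i)%:~R < q%:R / 2 :> R)] &&
  (supnorm (fun i => 2 * pi * (y i)%:~R / q%:R : R) <= 1 / Num.sqrt (q%:R : R)).

Definition quadform (R : realType) n (G : 'M[R]_n) (y : 'I_n -> int) : R :=
  let yR : 'cV[R]_n := \col_i (y i)%:~R in (yR^T *m G *m yR) 0 0.

Definition Msum (R : realType) n (G : 'M[R]_n) (q : nat) (alpha : R) : R :=
  \sum_(y : {ffun 'I_n -> 'I_(2 * q).+1} | inM R q (fun i => toZ (y i)))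
     expR (- ln (alpha * n%:R) * quadform G (fun i => toZ (y i))).

(* Main.v *)
Require Import Defs.
From HB Require Import structures.
From mathcomp Require Import all_boot all_order all_algebra.
From mathcomp Require Import all_classical all_reals all_analysis.
From mathcomp Require Import ring lra.
Import Order.TTheory GRing.Theory Num.Theory.
Import numFieldNormedType.Exports.
Local Open Scope ring_scope.
Set Implicit Arguments. Unset Strict Implicit. Unset Printing Implicit Defensive.
Section OneD.
Variable R : realType.
Definition hh (s x : R) := expR (- (s * x ^+ 2)).

Lemma hh_ge0 s x : 0 <= hh s x. Proof. exact: expR_ge0. Qed.
Lemma hh_le1 s x : 0 <= s -> hh s x <= 1.
Proof. move=> s0; rewrite /hh -expR0 ler_expR; have := sqr_ge0 x; nra. Qed.
Lemma hhN s x : hh s (- x) = hh s x.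
Proof. by rewrite /hh sqrrN. Qed.
Lemma hh_mono s x y : 0 <= s -> 0 <= y -> y <= x -> hh s x <= hh s y.
Proof. move=> s0 y0 yx; rewrite /hh ler_expR lerN2; apply: ler_wpM2l => //; nra. Qed.

Lemma hh_step s c : hh s (c + 1) = hh s c * expR (- (s * (2 * c + 1))).
Proof. by rewrite /hh -expRD; congr expR; ring. Qed.

Lemma L1 s (s0 : 0 <= s) (u5 : expR (- s) <= 1/5) N c : 0 <= c ->
  \sum_(0 <= j < N) hh s (c + j%:R) <= 5/4 * hh s c.
Proof.
elim: N c => [|N IH] c c0; first by rewrite big_geq // mulr_ge0 // hh_ge0.
rewrite big_nat_recl // addr0.
have E i : c + i.+1%:R = (c+1) + i%:R by rewrite -natr1; ring.
under eq_bigr => i _ do rewrite E.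
have := IH (c + 1) ltac:(lra).
have : hh s (c + 1) <= hh s c * (1/5).
  rewrite hh_step ler_wpM2l ?hh_ge0 //; apply: le_trans u5.
  rewrite ler_expR lerN2; nra.
have := hh_ge0 s c.
lra.
Qed.

Lemma L2 s (s0 : 0 <= s) (u5 : expR (- s) <= 1/5) M c : 0 <= c ->
  \sum_(0 <= j < M) hh s (c + j%:R) <= hh s c + 5/4 * hh s (c + 1).
Proof.
case: M => [|M] c0; first by rewrite big_geq //; have := hh_ge0 s c; have := hh_ge0 s (c+1); lra.
rewrite big_nat_recl // addr0 lerD2l.
have E i : c + i.+1%:R = (c+1) + i%:R by rewrite -natr1; ring.
under eq_bigr => i _ do rewrite E.
by apply: L1 => //; lra.
Qed.
End OneD.

Section Phi.
Variable R : realType.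
Lemma expR_inv_le (x : R) : expR (- x) * (1 + x) <= 1.
Proof.
have h1 := expR_ge1Dx x. have h2 := expR_gt0 (- x).
have : expR (- x) * expR x = 1 by rewrite -expRD addNr expR0.
nra.
Qed.

Lemma phi_bound (s c : R) : 4096 <= s -> 0 <= c -> c <= 1/2 ->
  hh s c + hh s (1 - c) <= 1 + 4/3 * expR (- s).
Proof.
move=> s4 c0 c2.
have s0 : 0 < s by lra.
have sn : s != 0 by rewrite gt_eqF.
have e14 : expR (1/4 : R) <= 4/3.
  have := expR_ge1Dx (-(1/4) : R). have := expR_gt0 (1/4:R).
  have : expR (-(1/4):R) * expR (1/4) = 1 by rewrite -expRD addNr expR0.
  nra.
have [cs|cs] := lerP c (1/(8*s)).
- have : hh s (1 - c) <= expR (- s) * (4/3).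
    apply: le_trans (_ : expR (- s) * expR (1/4) <= _); last first.
      by rewrite ler_wpM2l // expR_ge0.
    rewrite /hh -expRD ler_expR.
    move: cs; rewrite ler_pdivlMr ?mulr_gt0 // => cs.
    have : 0 <= s * (c * c) by apply: mulr_ge0; nra.
    rewrite expr2; nra.
  have := hh_le1 c (ltW s0). lra.
- have hc : hh s c <= expR (- (1/(64*s))).
    rewrite /hh ler_expR lerN2.
    have -> : 1/(64 * s) = s * (1/(8*s))^+2 by field.
    apply: ler_wpM2l; first lra.
    have : 0 <= 1/(8*s) by rewrite divr_ge0 //; lra.
    move=> hp; rewrite ler_sqr ?nnegrE //; exact: ltW cs.
  have h1c : hh s (1 - c) <= expR (- (s/4)).
    rewrite /hh ler_expR lerN2.
    have : 1/4 <= (1 - c)^+2 by nra.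
    move=> h; have -> : s / 4 = s * (1/4) by field.
    apply: ler_wpM2l; lra.
  have hE := expR_inv_le (1/(64*s)).
  have hF := expR_inv_le (s/4).
  have e8 := expR_ge1Dx (s/8).
  have es : expR (s/4) = expR (s/8) * expR (s/8) by rewrite -expRD; congr expR; field.
  have big : 64 * s + 1 <= expR (s/4).
    rewrite es; have : 64 * s + 1 <= (1 + s/8) * (1 + s/8) by nra.
    move=> h; apply: le_trans h _; apply: ler_pM; lra.
  have F1 : expR (- (s/4)) * (64 * s + 1) <= 1.
    have : expR (- (s/4)) * expR (s/4) = 1 by rewrite -expRD addNr expR0.
    have := expR_gt0 (- (s/4)). nra.
  have E1 : expR (- (1/(64*s))) * (64 * s + 1) <= 64 * s.
    have -> : 64 * s + 1 = 64 * s * (1 + 1/(64*s)) by field.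
    rewrite mulrCA. rewrite -[X in _ <= X]mulr1. apply: ler_wpM2l; lra.
  have EF : expR (- (1/(64*s))) + expR (- (s/4)) <= 1.
    have p : 0 < 64 * s + 1 by lra.
    rewrite -(ler_pM2r p) mulrDl; lra.
  have := expR_ge0 (- s). lra.
Qed.
End Phi.

Section Win.
Variable R : realType.
Implicit Types s c : R.

Lemma u_small s : 4096 <= s -> expR (- s) <= 1/5.
Proof.
move=> s4; have := expR_ge1Dx s; have := expR_gt0 (- s).
have : expR (- s) * expR s = 1 by rewrite -expRD addNr expR0.
nra.
Qed.

Lemma hh1 s : hh s 1 = expR (- s). Proof. by rewrite /hh expr1n mulr1. Qed.

Lemma side_bound s c : 4096 <= s -> 0 <= c -> hh s c + 5/4 * hh s (c + 1) <= 1 + 3 * expR (- s).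
Proof.
move=> s4 c0.
have := hh_le1 c (_ : 0 <= s). have := @hh_mono _ s (c + 1) 1.
rewrite hh1 => h1 h2.
have := h1 ltac:(lra) ltac:(lra) ltac:(lra). have := h2 ltac:(lra).
have := expR_ge0 (- s). lra.
Qed.

Lemma core_half s c : 4096 <= s -> 0 <= c -> c <= 1/2 ->
  hh s c + hh s (1 - c) + 5/4 * (hh s (c + 1) + hh s (2 - c)) <= 1 + 3 * expR (- s).
Proof.
move=> s4 c0 c2.
have ph := phi_bound s4 c0 c2.
have h1 : hh s (c + 1) <= expR (- s) by rewrite -hh1; apply: hh_mono; lra.
have h2 : hh s (2 - c) <= expR (- s) * expR (- s).
  apply: le_trans (_ : hh s (3/2) <= _); first by apply: hh_mono; lra.
  rewrite /hh -expRD ler_expR; lra.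
have u5 := u_small s4. have u0 := expR_ge0 (- s).
nra.
Qed.

Lemma core s c : 4096 <= s -> 0 <= c -> c <= 1 ->
  hh s c + hh s (1 - c) + 5/4 * (hh s (c + 1) + hh s (2 - c)) <= 1 + 3 * expR (- s).
Proof.
move=> s4 c0 c1.
have [ch|ch] := lerP c (1/2); first exact: core_half.
have := @core_half s (1 - c) s4 ltac:(lra) ltac:(lra).
have -> : 1 - (1 - c) = c by ring.
have -> : 1 - c + 1 = 2 - c by ring.
have -> : 2 - (1 - c) = c + 1 by ring.
lra.
Qed.

Lemma split_ex c0 N : exists k, [/\ (k <= N)%N, (0 < k)%N -> c0 + (k.-1)%:R < 0 &
   (k < N)%N -> 0 <= c0 + k%:R].
Proof.
elim: N => [|N [k [kN h1 h2]]]; first by exists 0%N.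
have [kN'|kN'] := ltnP k N.
  exists k; split => //; [exact: ltnW | move=> _; exact: h2].
have eN : k = N by apply/eqP; rewrite eqn_leq kN kN'.
subst k.
have [p|p] := lerP 0 (c0 + N%:R).
  by exists N; split => //.
by exists N.+1; split => //; rewrite ltnn.
Qed.

Lemma window s N c0 : 4096 <= s ->
  \sum_(0 <= j < N) hh s (c0 + j%:R) <= 1 + 3 * expR (- s).
Proof.
move=> s4.
have s0 : 0 <= s by lra.
have u5 := u_small s4.
have [k [kN hneg hpos]] := split_ex c0 N.
rewrite (big_cat_nat (leq0n k) kN) /=.
have Epos : \sum_(k <= j < N) hh s (c0 + j%:R) = \sum_(0 <= i < N - k) hh s ((c0 + k%:R) + i%:R).
  rewrite -{1}(add0n k) big_addn; apply: eq_bigr => i _; rewrite natrD; congr hh; ring.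
have Eneg : \sum_(0 <= j < k) hh s (c0 + j%:R) = \sum_(0 <= i < k) hh s ((1 - (c0 + k%:R)) + i%:R).
  rewrite big_nat_rev add0n; apply: eq_big_nat => i /andP [_ ik].
  rewrite -hhN; congr hh; rewrite natrB // -natr1; ring.
rewrite Epos Eneg.
have [k0|kpos] := posnP k.
  subst k; rewrite big_geq // add0r.
  case: N kN hpos Epos => [|N] _ hpos _; first by rewrite big_geq //; have := expR_ge0 (- s); lra.
  apply: le_trans (L2 s0 u5 _ _) _; first by have := hpos isT; lra.
  have h := hpos isT. apply: side_bound => //.
have c1lt : c0 + k%:R < 1.
  have := hneg kpos; rewrite -(prednK kpos) -natr1; lra.
have [kN2|kN2] := ltnP k N.
  have c1ge := hpos kN2.
  apply: le_trans (lerD (L2 s0 u5 _ _) (L2 s0 u5 _ _)) _; [lra|lra|].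
  have := @core s (c0 + k%:R) s4 c1ge ltac:(lra).
  have -> : 1 - (c0 + k%:R) + 1 = 2 - (c0 + k%:R) by ring.
  lra.
have eN : k = N by apply/eqP; rewrite eqn_leq kN kN2.
subst k; rewrite subnn (big_geq (leqnn 0%N)) addr0.
apply: le_trans (L2 s0 u5 _ _) _; first lra.
apply: side_bound => //; lra.
Qed.
End Win.

Section Dec.
Variable R : realType.
Definition qf k (A : 'M[R]_k) (z : 'I_k -> R) := \sum_i \sum_j z i * A i j * z j.

Lemma mulE k (A B : 'M[R]_k) a b : (A *m B) a b = \sum_j A a j * B j b.
Proof. by rewrite mxE. Qed.
Lemma oneE k a b : (1%:M : 'M[R]_k) a b = (a == b)%:R.
Proof. by rewrite mxE. Qed.

Lemma sum_delta k (f : 'I_k -> R) a : \sum_j (a == j)%:R * f j = f a.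
Proof.
rewrite (bigD1 a) //= eqxx mul1r big1 ?addr0 // => j ja.
by rewrite eq_sym (negbTE ja) mul0r.
Qed.

Lemma inv_app k (A B : 'M[R]_k) (x : 'I_k -> R) l : A *m B = 1%:M ->
  \sum_i A l i * (\sum_j B i j * x j) = x l.
Proof.
move=> AB.
under eq_bigr do rewrite mulr_sumr.
rewrite exchange_big /=.
under eq_bigr => j _ do (under eq_bigr do rewrite mulrA; rewrite -mulr_suml -mulE AB oneE).
exact: sum_delta.
Qed.

Lemma decomp k (P : 'M[R]_k.+1) (P' : 'M[R]_k) (Pu : P \in unitmx) (P'u : P' \in unitmx)
  (Ps : P^T = P)
  (HP : forall i j, P (widen_ord (leqnSn k) i) (widen_ord (leqnSn k) j) = P' i j) :
  (invmx P) ord_max ord_max * (P ord_max ord_max - \sum_j (\sum_i P ord_max (widen_ord (leqnSn k) i) * (invmx P') i j) * P (widen_ord (leqnSn k) j) ord_max) = 1 /\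
  (forall z : 'I_k.+1 -> R, qf (invmx P) z = (invmx P) ord_max ord_max *
     (z ord_max + (\sum_i (invmx P) ord_max (widen_ord (leqnSn k) i) * z (widen_ord (leqnSn k) i)) / (invmx P) ord_max ord_max)^+2
     + qf (invmx P') (fun i => z (widen_ord (leqnSn k) i))).
Proof.
set M := invmx P; set N := invmx P'; set W := widen_ord (leqnSn k).
have PM a b : \sum_j P a j * M j b = (a == b)%:R by rewrite -mulE mulmxV // oneE.
have MP a b : \sum_j M a j * P j b = (a == b)%:R by rewrite -mulE mulVmx // oneE.
have NP' : N *m P' = 1%:M by rewrite mulVmx.
have Ms a b : M a b = M b a.
  have : M^T = M by rewrite /M trmx_inv Ps.
  by move=> /matrixP /(_ b a); rewrite mxE.
have Wn i : (W i == ord_max) = false.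
  apply/negbTE/eqP => /(congr1 val) /= h; have := ltn_ord i; by rewrite h ltnn.
have WW i j : (W i == W j) = (i == j).
  apply/idP/idP => [/eqP h|/eqP -> //]; apply/eqP/val_inj; exact: (congr1 val h).
set m22 := M ord_max ord_max.
have hB i : \sum_j P' i j * M (W j) ord_max = - (P (W i) ord_max * m22).
  have := PM (W i) ord_max; rewrite big_ord_recr /= Wn.
  under eq_bigr do rewrite HP.
  by move=> /eqP; rewrite addr_eq0 => /eqP.
have hv l : M (W l) ord_max = \sum_i N l i * (- (P (W i) ord_max * m22)).
  rewrite -(inv_app (fun j => M (W j) ord_max) l NP').
  by apply: eq_bigr => i _; rewrite hB.
have hC : \sum_(j<k) P ord_max (W j) * M (W j) ord_max + P ord_max ord_max * m22 = 1.
  by have := PM ord_max ord_max; rewrite big_ord_recr eqxx.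
have part1 : m22 * (P ord_max ord_max - \sum_j (\sum_i P ord_max (W i) * N i j) * P (W j) ord_max) = 1.
  rewrite -hC mulrBr addrC; congr (_ + _); last by rewrite mulrC.
  apply/esym.
  under eq_bigr do rewrite hv.
  under eq_bigr do rewrite mulr_sumr.
  rewrite mulr_sumr exchange_big /=.
  rewrite -sumrN; apply: eq_bigr => j _; rewrite mulrCA mulr_suml -sumrN; apply: eq_bigr => i _.
  ring.
split; first exact: part1.
have m0 : m22 != 0.
  by apply/eqP => h; move: part1; rewrite h mul0r => /eqP; rewrite eq_sym oner_eq0.
have hE l : \sum_j M ord_max (W j) * P' j l = - (m22 * P ord_max (W l)).
  have := MP ord_max (W l); rewrite big_ord_recr /= eq_sym Wn.
  under eq_bigr do rewrite HP.
  by move/eqP; rewrite addr_eq0 => /eqP.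
have hD i l : \sum_j M (W i) (W j) * P' j l + M (W i) ord_max * P ord_max (W l) = (i == l)%:R.
  have := MP (W i) (W l); rewrite big_ord_recr /= WW.
  by under eq_bigr do rewrite HP.
set K := \matrix_(i, j) (M (W i) (W j) - M (W i) ord_max * M ord_max (W j) / m22).
have KP : K *m P' = 1%:M.
  apply/matrixP => i l; rewrite mulE oneE -hD.
  under eq_bigr do rewrite mxE mulrBl.
  rewrite sumrB; congr (_ + _).
  rewrite (eq_bigr (fun j => M (W i) ord_max / m22 * (M ord_max (W j) * P' j l))); last first.
    by move=> j _; ring.
  rewrite -mulr_sumr hE.
  by field.
have NK : N = K.
  by rewrite -[K]mulmx1 -(mulmxV P'u) mulmxA KP mul1mx.
move=> z.
set zm := z ord_max.
set c := \sum_i M ord_max (W i) * z (W i).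
set Q := \sum_i \sum_j z (W i) * M (W i) (W j) * z (W j).
have hc2 : \sum_i z (W i) * M (W i) ord_max = c.
  by apply: eq_bigr => i _; rewrite Ms mulrC.
have hc3 : \sum_j zm * M ord_max (W j) * z (W j) = zm * c.
  by rewrite mulr_sumr; apply: eq_bigr => j _; rewrite mulrA.
have eL : qf M z = Q + 2 * zm * c + m22 * zm^+2.
  rewrite /qf big_ord_recr /=.
  under eq_bigr do rewrite big_ord_recr /=.
  rewrite big_split /= big_ord_recr /= -/W -/zm -/Q hc3 -mulr_suml hc2.
  rewrite /m22; ring.
have eR : qf N (fun i => z (W i)) = Q - c * c / m22.
  rewrite /qf NK.
  have ee i j : z (W i) * K i j * z (W j) = z (W i) * M (W i) (W j) * z (W j) -
     (z (W i) * M (W i) ord_max) * (M ord_max (W j) * z (W j)) / m22.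
    by rewrite mxE; ring.
  under eq_bigr do under eq_bigr do rewrite ee.
  under eq_bigr do rewrite sumrB.
  rewrite sumrB; congr (_ - _).
  rewrite -{1}hc2 -mulrA mulr_suml; apply: eq_bigr => i _.
  rewrite mulr_suml mulr_sumr; apply: eq_bigr => j _; ring.
rewrite eL eR; field; exact: m0.
Qed.
End Dec.

Section PD.
Variable R : realType.
Definition bil k (A : 'M[R]_k) (x y : 'I_k -> R) := \sum_i \sum_j x i * A i j * y j.

Lemma qfE k (A : 'M[R]_k) (x : 'cV_k) : (x^T *m A *m x) 0 0 = qf A (fun i => x i 0).
Proof.
rewrite mxE /qf; under eq_bigr do rewrite mxE mulr_suml.
rewrite exchange_big /=; apply: eq_bigr => i _; apply: eq_bigr => j _.
by rewrite !mxE.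
Qed.

Lemma qf_pol k (A : 'M[R]_k) (x y : 'I_k -> R) t :
  qf A (fun i => x i + t * y i) = qf A x + t * (bil A x y + bil A y x) + t ^+ 2 * qf A y.
Proof.
rewrite /qf /bil mulrDr !mulr_sumr -!big_split /=; apply: eq_bigr => i _.
rewrite !mulr_sumr -!big_split /=; apply: eq_bigr => j _; ring.
Qed.

Lemma bilC k (A : 'M[R]_k) x y : (forall i j, A i j = A j i) -> bil A x y = bil A y x.
Proof.
move=> As; rewrite /bil exchange_big /=; apply: eq_bigr => i _; apply: eq_bigr => j _.
by rewrite As; ring.
Qed.

Lemma unit_of_ker k (A : 'M[R]_k) : (forall u : 'rV_k, u *m A = 0 -> u = 0) -> A \in unitmx.
Proof.
move=> H; rewrite -row_free_unit -kermx_eq0; apply/eqP/row_matrixP => i.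
by rewrite row0; apply: H; rewrite -row_mul mulmx_ker row0.
Qed.

Lemma pd_of_psd k (G : 'M[R]_k) : (forall i j, G i j = G j i) -> (forall z, 0 <= qf G z) ->
  G \in unitmx -> forall z, qf G z = 0 -> forall i, z i = 0.
Proof.
move=> Gs psd Gu z hz.
have hb : forall y, bil G y z = 0.
  move=> y; set b := bil G y z; set d := qf G y.
  have d0 : 0 <= d := psd y.
  have := psd (fun i => z i + (- b / (d + 1)) * y i).
  rewrite qf_pol hz (bilC _ _ Gs) -/b.
  move=> h.
  have h2 : 0 <= b * b * (- 2 * (d + 1) + d).
    have p : 0 < (d + 1) ^+ 2 by rewrite exprn_gt0 //; lra.
    move: h; rewrite -(pmulr_rge0 _ p).
    have -> : (d + 1) ^+ 2 * (0 + - b / (d + 1) * (b + b) + (- b / (d + 1)) ^+ 2 * d)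
       = b * b * (- 2 * (d + 1) + d) by field; apply/eqP => /eqP h1; lra.
    by [].
  apply/eqP; rewrite -(@sqrf_eq0 _ b); apply/eqP.
  have : 0 <= b ^+ 2 by apply: sqr_ge0.
  rewrite expr2 in h2 *; nra.
have Gz : G *m (\col_i z i) = 0.
  apply/matrixP => i j; rewrite !mxE (ord1 j).
  have e : bil G (fun l => (l == i)%:R) z = \sum_m G i m * z m.
    rewrite /bil (bigD1 i) //= eqxx [X in _ + X = _]big1 ?addr0.
      by apply: eq_bigr => m _; rewrite mul1r.
    move=> l li; apply: big1 => m _; by rewrite (negbTE li) !mul0r.
  rewrite -[RHS](hb (fun l => (l == i)%:R)) e; apply: eq_bigr => m _; by rewrite mxE.
move=> i.
have : (\col_i z i : 'cV_k) = 0.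
  by rewrite -[\col_i z i]mul1mx -(mulVmx Gu) -mulmxA Gz mulmx0.
by move/matrixP/(_ i 0); rewrite !mxE.
Qed.
End PD.

Section Blocks.
Variable R : realType.
Variable n : nat.
Variable Psi : 'M[R]_n.+1.
Hypothesis Psis : forall i j, Psi i j = Psi j i.
Hypothesis Psipd : forall z, qf Psi z = 0 -> forall i, z i = 0.

Definition Pk k : 'M[R]_k := \matrix_(i, j) Psi (inord i) (inord j).

Lemma Pk_sym k : (Pk k)^T = Pk k.
Proof. by apply/matrixP => i j; rewrite !mxE Psis. Qed.

Lemma Pk_full : Pk n.+1 = Psi.
Proof. by apply/matrixP => i j; rewrite !mxE !inord_val. Qed.

Lemma Pk_widen k i j : Pk k.+1 (widen_ord (leqnSn k) i) (widen_ord (leqnSn k) j) = Pk k i j.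
Proof. by rewrite !mxE. Qed.

Lemma Pk_unit k : (k <= n.+1)%N -> Pk k \in unitmx.
Proof.
move=> kn; apply: unit_of_ker => u hu.
case: k kn u hu => [|k] kn u hu; first by apply/matrixP => i [].
set ext : 'I_n.+1 -> R := fun i => if (i < k.+1)%N then u 0 (inord i) else 0.
have qe : qf Psi ext = qf (Pk k.+1) (fun j => u 0 j).
  rewrite /qf (bigID (fun i : 'I_n.+1 => (i < k.+1)%N)) /=.
  rewrite [X in _ + X]big1 ?addr0; last by move=> i /negbTE hi; apply: big1 => j _; rewrite /ext hi /= !mul0r.
  rewrite (big_ord_narrow kn); apply: eq_bigr => i _.
  rewrite (bigID (fun j : 'I_n.+1 => (j < k.+1)%N)) /=.
  rewrite [X in _ + X]big1 ?addr0; last by move=> j /negbTE hj; rewrite /ext hj /= mulr0.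
  rewrite (big_ord_narrow kn); apply: eq_bigr => j _.
  rewrite /ext /= !ltn_ord !inord_val mxE; congr (_ * Psi _ _ * _); apply/val_inj; rewrite /= inordK //;
    exact: leq_trans (ltn_ord _) kn.
have q0 : qf (Pk k.+1) (fun j => u 0 j) = 0.
  rewrite /qf exchange_big /=; apply: big1 => j _.
  rewrite -mulr_suml.
  have := congr1 (fun A : 'M[R]_(1, k.+1) => A 0 j) hu; rewrite !mxE => ->; by rewrite mul0r.
apply/matrixP => i j; rewrite (ord1 i) mxE.
have := Psipd (etrans qe q0) (widen_ord kn j).
by rewrite /ext /= ltn_ord inord_val.
Qed.

Lemma schur_Pk (k : 'I_n.+1) :
  schur_a Psi k = (Psi k k - \sum_j (\sum_i Pk k.+1 ord_max (widen_ord (leqnSn k) i) * (invmx (Pk k)) i j)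
       * Pk k.+1 (widen_ord (leqnSn k) j) ord_max)^-1.
Proof.
rewrite /schur_a.
set w := widen_ord _.
have hw : forall i : 'I_k, inord i = w i :> 'I_n.+1.
  move=> i; apply/val_inj; rewrite /= inordK //; exact: leq_trans (ltn_ord _) (ltnW (ltn_ord k)).
have -> : (\matrix_(i, j) Psi (w i) (w j)) = Pk k :> 'M[R]_k.
  by apply/matrixP => i j; rewrite !mxE !hw.
congr (GRing.inv (_ - _)); rewrite !mxE; apply: eq_bigr => j _; rewrite !mxE; congr (_ * _).
  apply: eq_bigr => i _; rewrite !mxE /= inord_val hw //.
by rewrite /= inord_val hw.
Qed.
End Blocks.

Section Box.
Variable R : realType.

Definition ext k (T : finType) (g : {ffun 'I_k -> T}) (x : T) : {ffun 'I_k.+1 -> T} :=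
  [ffun i => if unlift ord_max i is Some j then g j else x].

Lemma widen_lift k (j : 'I_k) : widen_ord (leqnSn k) j = lift ord_max j.
Proof. by apply/val_inj; rewrite /= /bump leqNgt ltn_ord. Qed.

Lemma ext_max k T g x : @ext k T g x ord_max = x.
Proof. by rewrite ffunE unlift_none. Qed.
Lemma ext_w k T g x j : @ext k T g x (widen_ord (leqnSn k) j) = g j.
Proof. by rewrite widen_lift ffunE liftK. Qed.

Lemma ffun_split k (T : finType) (F : {ffun 'I_k.+1 -> T} -> R) :
  \sum_f F f = \sum_(g : {ffun 'I_k -> T}) \sum_(x : T) F (ext g x).
Proof.
rewrite pair_bigA /= (reindex (fun p : {ffun 'I_k -> T} * T => ext p.1 p.2)) //.
apply: onW_bij.
exists (fun f : {ffun 'I_k.+1 -> T} => ([ffun j => f (lift ord_max j)], f ord_max)).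
  move=> [g x] /=; congr (_, _); last exact: ext_max.
  by apply/ffunP => j; rewrite ffunE -widen_lift ext_w.
move=> f; apply/ffunP => i; rewrite ffunE.
by case: unliftP => [j ->|->] //; rewrite ffunE.
Qed.

Variable n : nat.
Variable Psi : 'M[R]_n.+1.
Hypothesis Psis : forall i j, Psi i j = Psi j i.
Hypothesis Psipd : forall z, qf Psi z = 0 -> forall i, z i = 0.
Variable q : nat.
Variable L : R.

Definition Sk k := \sum_(f : {ffun 'I_k -> 'I_(2*q).+1})
   expR (- L * qf (invmx (Pk Psi k)) (fun i => (toZ (f i))%:~R)).

Lemma step (k : 'I_n.+1) : 4096 <= L * schur_a Psi k ->
  Sk k.+1 <= (1 + 3 * expR (- (L * schur_a Psi k))) * Sk k.
Proof.
move=> s4.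
have kn : (k.+1 <= n.+1)%N := ltn_ord k.
have [part1 part2] := decomp (Pk_unit Psipd kn) (Pk_unit Psipd (ltnW kn)) (Pk_sym Psis _) (@Pk_widen _ _ Psi k).
set M := invmx (Pk Psi k.+1) in part1 part2.
set N := invmx (Pk Psi k) in part2.
have m22E : M ord_max ord_max = schur_a Psi k.
  rewrite schur_Pk.
  move: part1; set X := (_ - _) => part1.
  have e : Pk Psi k.+1 ord_max ord_max = Psi k k by rewrite mxE /= inord_val.
  rewrite -e -/X.
  have Xn0 : X != 0 by apply/eqP => h; move: part1; rewrite h mulr0 => /eqP; rewrite eq_sym oner_eq0.
  by rewrite -[LHS]mulr1 -(mulfV Xn0) mulrA part1 mul1r.
set s := L * schur_a Psi k.
rewrite /Sk ffun_split mulr_sumr; apply: ler_sum => g _.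
set E := expR (- L * qf N (fun i => (toZ (g i))%:~R)).
set t := (\sum_i M ord_max (widen_ord (leqnSn k) i) * (toZ (g i))%:~R) / M ord_max ord_max.
have key : forall x, expR (- L * qf M (fun i => (toZ (ext g x i))%:~R)) = E * hh s ((toZ x)%:~R + t).
  move=> x; rewrite part2 ext_max.
  under eq_bigr do rewrite ext_w.
  have -> : (fun i => (toZ (ext g x (widen_ord (leqnSn k) i)))%:~R) = (fun i => (toZ (g i))%:~R :> R).
    by apply: funext => i; rewrite ext_w.
  rewrite /E /hh -expRD /s -m22E -/t; congr expR; ring.
under eq_bigr do rewrite key.
rewrite -mulr_sumr mulrC; apply: ler_wpM2r; first exact: expR_ge0.
have -> : \sum_(x < (2*q).+1) hh s ((toZ x)%:~R + t) = \sum_(0 <= j < (2*q).+1) hh s ((t - q%:R) + j%:R).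
  rewrite big_mkord; apply: eq_bigr => j _; rewrite /toZ intrB; congr hh.
  have hz : forall m : nat, (m%:Z)%:~R = m%:R :> R by [].
  by rewrite !hz; ring.
exact: window.
Qed.

Lemma Sk0 : Sk 0 = 1.
Proof.
rewrite /Sk; under eq_bigr => f _ do rewrite /qf big_ord0 mulr0 expR0.
by rewrite sumr_const card_ffun card_ord card_ord expn0.
Qed.

Lemma Sk_bound (hs : forall k : 'I_n.+1, 4096 <= L * schur_a Psi k) k : (k <= n.+1)%N ->
  Sk k <= \prod_(i < k) (1 + 3 * expR (- (L * schur_a Psi (inord i)))).
Proof.
elim: k => [|k IH] kn; first by rewrite Sk0 big_ord0.
have kn' : (k < n.+1)%N := kn.
have e : inord k = Ordinal kn' :> 'I_n.+1 by apply/val_inj; rewrite /= inordK.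
apply: le_trans (step (hs (Ordinal kn'))) _.
rewrite big_ord_recr /= mulrC e; apply: ler_wpM2r.
  by have := expR_ge0 (- (L * schur_a Psi (Ordinal kn'))); lra.
exact: IH (ltnW kn).
Qed.
End Box.

Section Final.
Variable R : realType.
Lemma prod_exp k (u : nat -> R) : (forall i, 0 <= u i) ->
  \prod_(i < k) (1 + 3 * u i) <= expR (3 * \sum_(i < k) u i).
Proof.
move=> u0; elim: k => [|k IH]; first by rewrite !big_ord0 mulr0 expR0.
rewrite !big_ord_recr /= [in X in expR X]mulrDr expRD; apply: ler_pM.
- by apply: prodr_ge0 => i _; have := u0 i; lra.
- by have := u0 k; lra.
- exact: IH.
- exact: expR_ge1Dx.
Qed.
End Final.

Unset Implicit Arguments.

Theorem mainTheorem6 (R : realType) (Gamma : forall n : nat, 'M[R]_n) (g : R -> R) :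
  (forall n, correlation_matrix (Gamma n)) ->
  (forall n, Gamma n \in unitmx) ->
  CorrelationCondition Gamma g ->
  forall alpha : R, 1 <= alpha ->
  exists n0 : nat, forall n : nat, (n0 <= n)%N -> forall q : nat, (0 < q)%N ->
    Msum (Gamma n) q alpha <= expR ((2 + supInvMax Gamma) * g alpha).
Proof.
move=> Hc Hu [[B hB] [gmono [gpos [glim gsum]]]] alpha ha.
set eps : R := expR (- 8192).
have eps0 : 0 < eps := expR_gt0 _.
move: glim => /cvgr0Pnorm_lt /(_ eps eps0) [M [Mr HM]].
set a' := Num.max (M + 1) 1.
have a'1 : 1 <= a' by rewrite le_max lexx orbT.
have a'M : M < a' by rewrite lt_max ltrDl ltr01.
have ga' : g a' < eps by apply: le_lt_trans (HM a' a'M); exact: ler_norm.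
have S1 : 1 <= supInvMax Gamma.
  have ub : has_ubound [set x : R | exists n, x = maxnorm (invmx (Gamma n))].
    by exists B => x [m ->]; exact: hB.
  have hsup := ub_le_sup ub (ex_intro (fun m => maxnorm (invmx (Gamma 1%N)) = maxnorm (invmx (Gamma m))) 1%N erefl).
  rewrite /supInvMax; apply: le_trans hsup.
  have e1 : invmx (Gamma 1%N) 0 0 = 1.
    have := congr1 (fun A : 'M[R]_1 => A 0 0) (mulmxV (Hu 1%N)).
    have [_ [Gd _]] := Hc 1%N.
    by rewrite mulE big_ord1 Gd mul1r oneE.
  rewrite /maxnorm big_ord_recl big_ord0 big_ord_recl big_ord0.
  by rewrite !le_max e1 normr1 lexx.
exists (Num.truncn a').+1.
move=> n hn q q0.
case: n hn => [|n] hn; first by [].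
have nbig : a' <= n.+1%:R.
  apply: le_trans (ltW (truncnS_gt a')) _; by rewrite ler_nat.
have [Gt [Gd Gpsd]] := Hc n.+1.
set G := Gamma n.+1 in Gt Gd Gpsd *.
set Psi := invmx G.
have Gs : forall i j, G i j = G j i.
  by move=> i j; rewrite -[in LHS]Gt mxE.
have Gpsd' : forall z, 0 <= qf G z.
  move=> z; have := Gpsd (\col_i z i); rewrite qfE.
  suff -> : (fun i => (\col_i z i : 'cV[R]_n.+1) i 0) = z by [].
  by apply: funext => i; rewrite mxE.
have Gpd := pd_of_psd Gs Gpsd' (Hu _).
have PsiT : Psi^T = Psi by rewrite /Psi trmx_inv Gt.
have Psis : forall i j, Psi i j = Psi j i.
  by move=> i j; rewrite -[in LHS]PsiT mxE.
have Psipd : forall z, qf Psi z = 0 -> forall i, z i = 0.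
  move=> z hz.
  set zc : 'cV[R]_n.+1 := \col_i z i.
  set w := Psi *m zc.
  have e : (w^T *m G *m w) 0 0 = (zc^T *m Psi *m zc) 0 0.
    rewrite /w trmx_mul PsiT -!mulmxA (mulmxA G) mulmxV ?Hu // mul1mx.
    by rewrite mulmxA.
  have hz' : (zc^T *m Psi *m zc) 0 0 = 0.
    rewrite qfE -hz; congr qf; apply: funext => i; by rewrite mxE.
  have hw := Gpd _ (etrans (esym (qfE G w)) (etrans e hz')).
  have zc0 : zc = 0.
    have -> : zc = G *m w by rewrite /w mulmxA mulmxV ?Hu // mul1mx.
    have -> : w = 0 by apply/matrixP => i j; rewrite (ord1 j) [RHS]mxE; exact: (hw i).
    by rewrite mulmx0.
  move=> i; have := congr1 (fun A : 'cV[R]_n.+1 => A i 0) zc0; by rewrite !mxE.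
set L := ln (alpha * n.+1%:R).
have hs : forall k : 'I_n.+1, 4096 <= L * schur_a Psi k.
  move=> k; set a := schur_a Psi k.
  have pos : 0 < a' * n.+1%:R by apply: mulr_gt0; [lra | rewrite ltr0n].
  have hterm : (a' * n.+1%:R) `^ (- a) <= g a'.
    apply: le_trans (gsum n.+1 a' a'1).
    rewrite (bigD1 k) //= lerDl; apply: sumr_ge0 => i _; exact: powR_ge0.
  rewrite /powR gt_eqF // in hterm.
  have h1 : - a * ln (a' * n.+1%:R) < - 8192.
    by rewrite -ltr_expR; apply: le_lt_trans hterm ga'.
  have n1 : 1 <= n.+1%:R :> R by rewrite ler1n.
  have lnp : 0 <= ln (a' * n.+1%:R) by apply: ln_ge0; nra.
  have a0 : 0 < a by nra.
  have l2 : ln (a' * n.+1%:R) <= L + L.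
    have ap : 0 < alpha * n.+1%:R by apply: mulr_gt0; [lra | rewrite ltr0n].
    have app : 0 < (alpha * n.+1%:R) * (alpha * n.+1%:R) by apply: mulr_gt0.
    rewrite /L -lnM ?posrE //.
    rewrite ler_ln ?posrE //.
    set N := n.+1%:R in nbig n1 *.
    have hN1 : a' * N <= N * N by apply: ler_wpM2r; lra.
    have hN2 : N <= alpha * N by have := @mulr_ge0 _ (alpha - 1) N ltac:(lra) ltac:(lra); nra.
    have hN3 : N * N <= (alpha * N) * (alpha * N) by apply: ler_pM; lra.
    lra.
  nra.
have Sb := Sk_bound Psis Psipd q hs (leqnn n.+1).
have eM : Msum G q alpha <= Sk Psi q L n.+1.
  rewrite /Msum /Sk big_mkcond /=; apply: ler_sum => y _.
  have eq : quadform G (fun i => toZ (y i)) = qf (invmx (Pk Psi n.+1)) (fun i => (toZ (y i))%:~R).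
    rewrite Pk_full /Psi invmxK /quadform qfE; congr qf; apply: funext => i; by rewrite mxE.
  case: ifP => _; first by rewrite eq.
  exact: expR_ge0.
have Pb := @prod_exp R n.+1 (fun i => expR (- (L * schur_a Psi (inord i)))) (fun i => expR_ge0 _).
have Sg : \sum_(i < n.+1) expR (- (L * schur_a Psi (inord i))) <= g alpha.
  apply: le_trans (gsum n.+1 alpha ha); rewrite le_eqVlt; apply/orP; left; apply/eqP.
  apply: eq_bigr => i _; rewrite inord_val /powR gt_eqF; last by apply: mulr_gt0; [lra | rewrite ltr0n].
  by congr expR; rewrite /L; ring.
have ga0 := gpos alpha ha.
apply: le_trans eM _; apply: le_trans Sb _; apply: le_trans Pb _.
rewrite ler_expR; nra.
Qed.
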